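(* Let $\mathbb{F}$ be a field of characteristic $2$ with at least $4$ elements, and let $B\in M_3(\mathbb{F})$ be a non-derogative matrix with trace $u_2$. Then for every $a\in\mathbb{F}$ with $a\neq u_2$ and $a\neq u_2+1$, there exist $N,D\in M_3(\mathbb{F})$ with $B=N+D$, $N^2=0$, and $D$ diagonalizable with eigenvalues $a$, $a+1$, $u_2+1$.
   Context: A square matrix is non-derogative if its minimal polynomial equals its characteristic polynomial. A matrix $D\in M_n(\mathbb{F})$ is diagonalizable if there exists an invertible $U\in M_n(\mathbb{F})$ such that $U^{-1}DU$ is diagonal. *)

(* Defs.v *)
From HB Require Import structures.
From mathcomp Require Import all_boot all_order all_algebra.
Set Implicit Arguments. Unset Strict Implicit. Unset Printing Implicit Defensive.
Import Order.TTheory GRing.Theory Num.Theory.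
Local Open Scope ring_scope.

Definition non_derogative (F : fieldType) (n : nat) (A : 'M[F]_n.+1) : Prop :=
  mxminpoly A = char_poly A.

(* Main.v *)
Require Import Defs.
From HB Require Import structures.
From mathcomp Require Import all_boot all_order all_algebra.
From mathcomp Require Import ring.
From Stdlib Require Import Classical.
Import GRing.Theory.
Local Open Scope ring_scope.
Set Implicit Arguments. Unset Strict Implicit. Unset Printing Implicit Defensive.

Definition C3 (F : fieldType) (p : {poly F}) : 'M[F]_3 :=
  \matrix_(i, j) if (i == 2%N :> nat) then - p`_j else (i.+1 == j)%:R.



Lemma cp_cast (F : fieldType) n (h : n = 3%N) (M : 'M[F]_n) :
  char_poly (castmx (h,h) M) = char_poly M.
Proof. by subst n; rewrite castmx_id. Qed.

Lemma C3K (F : fieldType) (p : {poly F}) : p \is monic -> size p = 4%N ->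
  char_poly (C3 p) = p.
Proof.
move=> pm sp.
have h : (size p).-1 = 3%N by rewrite sp.
have -> : C3 p = castmx (h,h) (companionmx p).
  apply/matrixP => i j; rewrite castmxE !mxE /=.
  by rewrite sp.
by rewrite cp_cast companionmxK.
Qed.

Lemma char_poly_conj (F : fieldType) (P M : 'M[F]_3) : P \in unitmx ->
  char_poly (invmx P *m M *m P) = char_poly M.
Proof.
move=> Pu; rewrite /char_poly /char_poly_mx.
have e : 'X%:M = map_mx polyC (invmx P) *m 'X%:M *m map_mx polyC P :> 'M_3.
  rewrite mul_mx_scalar -scalemxAl -map_mxM mulVmx // map_mx1.
  by rewrite scalemx1.
rewrite {1}e !map_mxM -!mulmxA -mulmxBr -mulmxBl !det_mulmx.
by rewrite mulrCA -det_mulmx -map_mxM mulVmx // map_mx1 det1 mulr1.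
Qed.

Lemma POLY4 (F : fieldType) (r : {poly F}) : (size r <= 4)%N ->
  r = (r`_0)%:P + r`_1 *: 'X + r`_2 *: 'X^2 + r`_3 *: 'X^3.
Proof.
move=> sr; apply/polyP => i; rewrite !coefD !coefZ coefC !coefXn coefX.
case: i => [|[|[|[|i]]]] /=; rewrite ?mulr0 ?mulr1 ?addr0 ?add0r //.
by rewrite nth_default // (leq_trans sr).
Qed.

Lemma KRY (F : fieldType) (B : 'M[F]_3) (v : 'rV[F]_3) (r : {poly F}) :
  (size r <= 4)%N -> v *m horner_mx B r =
  r`_0 *: v + r`_1 *: (v *m B) + r`_2 *: (v *m B *m B) + r`_3 *: (v *m B *m B *m B).
Proof.
move=> sr; rewrite {1}(@POLY4 _ r sr) !rmorphD /= !linearZ /= horner_mx_C horner_mx_X.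
rewrite !rmorphXn /= horner_mx_X !mulmxDr -!scalemxAr mul_mx_scalar.
by rewrite !exprS expr0 mulr1 -!mulmxE !mulmxA.
Qed.

Lemma hM (F : fieldType) (B : 'M[F]_3) (v : 'rV[F]_3) (r t : {poly F}) :
  v *m horner_mx B (r * t) = v *m horner_mx B r *m horner_mx B t.
Proof. by rewrite rmorphM /= -mulmxE mulmxA. Qed.

Lemma hC (F : fieldType) (B : 'M[F]_3) (v : 'rV[F]_3) (r t : {poly F}) :
  v *m horner_mx B (r * t) = v *m horner_mx B t *m horner_mx B r.
Proof. by rewrite mulrC hM. Qed.

Lemma hXl (F : fieldType) (B : 'M[F]_3) (v : 'rV[F]_3) l :
  v *m horner_mx B ('X - l%:P) = v *m B - l *: v.
Proof. by rewrite rmorphB /= horner_mx_X horner_mx_C mulmxBr mul_mx_scalar. Qed.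

Lemma EIG (F : fieldType) (B : 'M[F]_3) (z : 'rV[F]_3) l :
  z *m B = l *: z -> forall t, z *m horner_mx B t = t.[l] *: z.
Proof.
move=> hz; elim/poly_ind => [|t c IH].
  by rewrite rmorph0 mulmx0 horner0 scale0r.
rewrite rmorphD rmorphM /= horner_mx_X horner_mx_C -mulmxE mulmxDr mulmxA IH.
rewrite -scalemxAl hz mul_mx_scalar scalerA hornerMXaddC scalerDl.
by rewrite mulrC.
Qed.

Definition indep (F : fieldType) (B : 'M[F]_3) (v : 'rV[F]_3) (k : nat) :=
  forall r : {poly F}, (size r <= k)%N -> v *m horner_mx B r = 0 -> r = 0.

Lemma root_eig (F : fieldType) (B : 'M[F]_3) (z : 'rV[F]_3) l r :
  z != 0 -> z *m B = l *: z -> z *m horner_mx B r = 0 -> r.[l] = 0.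
Proof.
move=> nz hz; rewrite (EIG hz) => /eqP; rewrite scaler_eq0 (negPf nz) orbF.
by move/eqP.
Qed.

Lemma factor_small (F : fieldType) (r : {poly F}) l : r.[l] = 0 ->
  exists t, r = t * ('X - l%:P) /\ (size t <= (size r).-1)%N.
Proof.
move=> rl; have /factor_theorem [t ->] : root r l by apply/eqP.
exists t; split => //.
have [->|tn0] := eqVneq t 0; first by rewrite size_poly0.
by rewrite size_Mmonic ?monicXsubC // size_XsubC addn2.
Qed.

Lemma JORD (F : fieldType) (B : 'M[F]_3) (y z : 'rV[F]_3) l :
  y *m horner_mx B ('X - l%:P) = z -> z != 0 -> z *m B = l *: z ->
  indep B y 2.
Proof.
move=> hyz nz hz r sr hr.
have : y *m horner_mx B (r * ('X - l%:P)) = 0 by rewrite hM hr mul0mx.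
rewrite hC hyz => /(root_eig nz hz) rl.
have [t [rt st]] := factor_small rl.
have st1 : (size t <= 1)%N by apply: leq_trans st _; rewrite -subn1 leq_subLR.
move: hr; rewrite rt mulrC hM hyz (size1_polyC st1) horner_mx_C mul_mx_scalar.
move/eqP; rewrite scaler_eq0 (negPf nz) orbF => /eqP ->.
by rewrite polyC0 mulr0.
Qed.

Lemma JORD3 (F : fieldType) (B : 'M[F]_3) (y z : 'rV[F]_3) l :
  y *m horner_mx B (('X - l%:P) * ('X - l%:P)) = z -> z != 0 -> z *m B = l *: z ->
  indep B y 3.
Proof.
move=> hyz nz hz r sr hr.
have : y *m horner_mx B (r * (('X - l%:P) * ('X - l%:P))) = 0
  by rewrite hM hr mul0mx.
rewrite hC hyz => /(root_eig nz hz) rl.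
have [t [rt st]] := factor_small rl.
have st2 : (size t <= 2)%N by apply: leq_trans st _; rewrite -subn1 leq_subLR.
have hj : indep B (y *m horner_mx B ('X - l%:P)) 2.
  by apply: (JORD _ nz hz); rewrite -hM.
move: hr; rewrite rt hC => /(hj _ st2) ->.
by rewrite mul0r.
Qed.

Lemma COMB (F : fieldType) (B : 'M[F]_3) (u1 u2 : 'rV[F]_3) (q : {poly F}) l :
  indep B u1 2 -> u1 *m horner_mx B q = 0 -> (size q <= 3)%N ->
  u2 != 0 -> u2 *m B = l *: u2 -> q.[l] != 0 -> indep B (u1 + u2) 3.
Proof.
move=> i1 h1 sq nz hz ql r sr hr.
have e1 : (u1 + u2) *m horner_mx B (r * q) = 0 by rewrite hM hr mul0mx.
move: e1; rewrite hC mulmxDl h1 add0r -hM (EIG hz) hornerM.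
move/eqP; rewrite scaler_eq0 (negPf nz) orbF mulf_eq0 (negPf ql) /= => /eqP rl.
have h2 : u2 *m horner_mx B r = 0 by rewrite (EIG hz) rl scale0r.
have h3 : u1 *m horner_mx B r = 0 by move: hr; rewrite mulmxDl h2 addr0.
have qn0 : q != 0 by apply: contraNneq ql => ->; rewrite horner0.
have h4 : u1 *m horner_mx B (r %% q) = 0.
  have -> : r %% q = r - r %/ q * q by apply/eqP; rewrite eq_sym subr_eq addrC -divp_eq.
  by rewrite rmorphB /= mulmxBr h3 hC h1 mul0mx subr0.
have rm : r %% q = 0.
  apply: i1 h4; exact: leq_trans (ltn_modpN0 r qn0) sq.
have sq3 : size q = 3%N.
  apply/eqP; rewrite eqn_leq sq /=; rewrite ltnNge; apply/negP => sq2.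
  by move: qn0; rewrite (i1 _ sq2 h1) eqxx.
have er : r = r %/ q * q by rewrite {1}(divp_eq r q) rm addr0.
have [d0|dn0] := eqVneq (r %/ q) 0; first by rewrite er d0 mul0r.
have sd : (size (r %/ q)%R <= 1)%N.
  have h : (size (r %/ q * q)%R <= 3)%N by rewrite -er.
  by move: h; rewrite size_mul // sq3 addn3.
move: rl; rewrite er (size1_polyC sd) hornerM hornerC => /eqP.
rewrite mulf_eq0 (negPf ql) orbF => /eqP c0.
by rewrite c0 polyC0 mul0r.
Qed.

Lemma H0 (F : fieldType) (B : 'M[F]_3) : mxminpoly B = char_poly B ->
  forall r : {poly F}, r != 0 -> (size r <= 3)%N -> horner_mx B r != 0.
Proof.
move=> hm r rn0 sr; apply/eqP => h.
have := mxminpoly_min h; rewrite hm => /(dvdp_leq rn0).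
by rewrite size_char_poly => h4; move: (leq_trans h4 sr).
Qed.

Lemma eig_all (F : fieldType) (B : 'M[F]_3) (v : 'rV[F]_3) :
  ~ indep B v 2 -> exists l, v *m B = l *: v.
Proof.
move=> /not_all_ex_not [r H].
have [sr H2] := imply_to_and _ _ H.
have [hr rn0] := imply_to_and _ _ H2.
have [->|vn0] := eqVneq v 0; first by exists 0; rewrite mul0mx scaler0.
have sr4 : (size r <= 4)%N by apply: leq_trans sr _.
have r2 : r`_2 = 0 by rewrite nth_default.
have r3 : r`_3 = 0 by rewrite nth_default // (leq_trans sr).
move: hr; rewrite KRY // r2 r3 !scale0r !addr0 => hr.
have [r1|r1] := eqVneq r`_1 0.
  exfalso; apply: rn0; move: hr; rewrite r1 scale0r addr0 => /eqP.
  rewrite scaler_eq0 (negPf vn0) orbF => /eqP r0.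
  by rewrite (@POLY4 _ r sr4) r0 r1 r2 r3 !scale0r polyC0 !addr0.
exists (- r`_0 / r`_1).
apply: (@scalerI _ _ r`_1) => //.
rewrite scalerA mulrCA mulfV // mulr1 scaleNr.
by apply/eqP; rewrite -addr_eq0 addrC hr.
Qed.

Lemma L1 (F : fieldType) (B : 'M[F]_3) : mxminpoly B = char_poly B ->
  exists v, indep B v 2.
Proof.
move=> hm; apply: NNPP => H.
have eig (v : 'rV[F]_3) : exists l, v *m B = l *: v.
  by apply: eig_all => iv; apply: H; exists v.
pose E (i : 'I_3) := delta_mx 0 i : 'rV[F]_3.
have [l0 h0] := eig (E 0); have [l1 h1] := eig (E 1); have [l2 h2] := eig (E 2).
have [m hm3] := eig (E 0 + E 1 + E 2).
move: hm3; rewrite !mulmxDl h0 h1 h2 => hm3.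
have g (j : 'I_3) := congr1 (fun M : 'rV[F]_3 => M 0 j) hm3.
have := g 0; have := g 1; have := g 2; rewrite /E !mxE /=.
rewrite !mulr0 !mulr1 !add0r !addr0 => e2 e1 e0.
have hE i : E i *m B = m *: E i.
  case: i => [[|[|[|k]]] Hi] //.
  - have -> : Ordinal Hi = 0 by apply/val_inj.
    by rewrite h0 e0 mulr1.
  - have -> : Ordinal Hi = 1 by apply/val_inj.
    by rewrite h1 e1 mulr1.
  - have -> : Ordinal Hi = 2 by apply/val_inj.
    by rewrite h2 e2 mulr1.
have eB : B = m%:M.
  apply/matrixP => i j.
  have -> : B i j = (E i *m B) 0 j by rewrite /E -rowE mxE.
  by rewrite hE !mxE eqxx /= eq_sym mulr_natr.
have := H0 hm (r := 'X - m%:P); rewrite polyXsubC_eq0 size_XsubC.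
by rewrite raddfB /= horner_mx_X horner_mx_C eB subrr eqxx => /(_ isT isT).
Qed.

Lemma MON2 (F : fieldType) (s : {poly F}) : s \is monic -> size s = 2%N ->
  s = 'X - (- s`_0)%:P.
Proof.
move=> sm ss.
have s1 : s`_1 = 1 by move: sm; rewrite monicE lead_coefE ss => /eqP.
have s2 : s`_2 = 0 by rewrite nth_default // ss.
have s3 : s`_3 = 0 by rewrite nth_default // ss.
rewrite {1}(@POLY4 _ s); last by rewrite ss.
by rewrite s1 s2 s3 !scale0r !addr0 scale1r polyCN opprK addrC.
Qed.

Lemma eigX (F : fieldType) (B : 'M[F]_3) (w : 'rV[F]_3) l :
  w *m horner_mx B ('X - l%:P) = 0 -> w *m B = l *: w.
Proof. by rewrite hXl => /eqP; rewrite subr_eq0 => /eqP. Qed.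

Lemma rowNZ (F : fieldType) (Q : 'M[F]_3) : Q != 0 ->
  exists i, delta_mx 0 i *m Q != 0 :> 'rV[F]_3.
Proof.
move=> Qn0; apply: NNPP => hn; apply: (negP Qn0); apply/eqP/matrixP => i j.
have h := not_ex_all_not _ _ hn i.
have /eqP e : delta_mx 0 i *m Q == 0 :> 'rV[F]_3.
  by apply: negbNE; apply/negP.
by have := congr1 (fun M : 'rV[F]_3 => M 0 j) e; rewrite -rowE !mxE.
Qed.

Lemma CYC (F : fieldType) (B : 'M[F]_3) : mxminpoly B = char_poly B ->
  exists v, indep B v 3.
Proof.
move=> hm; have [v iv] := L1 hm.
case: (classic (indep B v 3)) => [iv3|]; first by exists v.
move=> /not_all_ex_not [r H].
have [sr H2] := imply_to_and _ _ H.
have [hr rn0] := imply_to_and _ _ H2.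
have rn0' : r != 0 by apply/eqP.
have lrn0 : lead_coef r != 0 by rewrite lead_coef_eq0.
pose q := (lead_coef r)^-1 *: r.
have qm : q \is monic by rewrite monicE lead_coefZ mulVf.
have sq : size q = size r by rewrite size_scale // invr_eq0.
have hq : v *m horner_mx B q = 0 by rewrite linearZ /= -scalemxAr hr scaler0.
have sr3 : size r = 3%N.
  apply/eqP; rewrite eqn_leq sr /= ltnNge; apply/negP => sr2.
  by apply: rn0; apply: iv sr2 hr.
pose p := char_poly B.
have hp (w : 'rV[F]_3) : w *m horner_mx B p = 0 by rewrite Cayley_Hamilton mulmx0.
have qn0 : q != 0 by rewrite -size_poly_eq0 sq sr3.
have pm : p %% q = 0.
  apply: iv.
    by have := ltn_modpN0 p qn0; rewrite sq sr3.
  have -> : p %% q = p - p %/ q * q.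
    by apply/eqP; rewrite eq_sym subr_eq addrC -divp_eq.
  by rewrite raddfB /= mulmxBr hp hC hq mul0mx subr0.
pose s := p %/ q.
have ep : p = s * q by rewrite {1}(divp_eq p q) pm addr0.
have sm : s \is monic by rewrite -(monicMr s qm) -ep char_poly_monic.
have sn0 : s != 0 by apply: monic_neq0.
have ss : size s = 2%N.
  have := size_char_poly B; rewrite -/p ep size_Mmonic // sq sr3 addn3 /=.
  by case.
set l := - s`_0.
have es : s = 'X - l%:P by apply: MON2.
have Qn0 : horner_mx B q != 0 by apply: H0 => //; rewrite sq sr3.
have [i zn0] := rowNZ Qn0.
set w := delta_mx 0 i : 'rV[F]_3.
set z := w *m horner_mx B q.
have hz : z *m B = l *: z.
  apply: eigX; rewrite /z -hM -es mulrC -ep; exact: hp.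
have [ql|ql] := eqVneq q.[l] 0; last first.
  by exists (v + z); apply: (COMB iv hq _ zn0 hz ql); rewrite sq sr3.
have [t [et st]] := factor_small ql.
have tm : t \is monic by rewrite -(monicMr t (monicXsubC l)) -et.
have st2 : size t = 2%N.
  have tn0 : t != 0 by apply: monic_neq0.
  have := sq; rewrite sr3 et size_Mmonic ?monicXsubC // size_XsubC addn2 /=.
  by case.
set mu := - t`_0.
have et2 : t = 'X - mu%:P by apply: MON2.
have [emu|nmu] := eqVneq mu l.
  exists w; apply: (JORD3 _ zn0 hz).
  by rewrite /z et et2 emu.
pose u1 := w *m horner_mx B ('X - mu%:P).
pose u2 := v *m horner_mx B ('X - l%:P).
have iu1 : indep B u1 2.
  by apply: (JORD _ zn0 hz); rewrite /u1 /z -hM et et2.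
have hu1 : u1 *m horner_mx B (('X - l%:P) * ('X - l%:P)) = 0.
  rewrite /u1 -hM.
  have -> : ('X - mu%:P) * (('X - l%:P) * ('X - l%:P)) = p.
    by rewrite ep es et et2; ring.
  exact: hp.
have u2n0 : u2 != 0.
  apply/eqP => e; have := iv _ _ e; rewrite size_XsubC => /(_ isT) /eqP.
  by rewrite polyXsubC_eq0.
have hu2 : u2 *m B = mu *: u2.
  apply: eigX; rewrite /u2 -hM mulrC -et2 -et; exact: hq.
have hq1 : (('X - l%:P) * ('X - l%:P)).[mu] != 0.
  by rewrite hornerM hornerXsubC mulf_neq0 // subr_eq0.
exists (u1 + u2); apply: (COMB iu1 hu1 _ u2n0 hu2 hq1).
by rewrite size_Mmonic ?monicXsubC ?polyXsubC_eq0 // !size_XsubC.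
Qed.

Lemma PM (F : fieldType) (B : 'M[F]_3) (v u : 'rV[F]_3) :
  u *m (\matrix_(i < 3, j < 3) (v *m B ^+ i) 0 j) =
  v *m horner_mx B (\poly_(k < 3) u 0 (inord k)).
Proof.
rewrite KRY; last by apply: leq_trans (size_poly _ _) _.
rewrite !coef_poly /= scale0r addr0 mulmx_sum_row !big_ord_recr big_ord0 /= add0r.
have rP i : row i (\matrix_(i < 3, j < 3) (v *m B ^+ i) 0 j) = v *m B ^+ i.
  by apply/rowP => j; rewrite !mxE.
rewrite !rP /= expr0 mulmx1 expr1 expr2 -mulmxE mulmxA.
by congr (_ *: _ + _ *: _ + _ *: _); congr (u 0 _); apply/val_inj; rewrite /= inordK.
Qed.

Lemma PUNIT (F : fieldType) (B : 'M[F]_3) (v : 'rV[F]_3) : indep B v 3 ->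
  (\matrix_(i < 3, j < 3) (v *m B ^+ i) 0 j) \in unitmx.
Proof.
move=> iv; rewrite unitmxE unitfE; apply/negP => /det0P [u un0].
rewrite PM => /iv h; apply/negP: un0; rewrite negbK; apply/eqP/rowP => j.
have := congr1 (fun r : {poly F} => r`_j) (h (size_poly _ _)).
by rewrite coef_poly ltn_ord inord_val coef0 mxE.
Qed.

Lemma PSIM (F : fieldType) (B : 'M[F]_3) (v : 'rV[F]_3) :
  let P := \matrix_(i < 3, j < 3) (v *m B ^+ i) 0 j in
  P *m B = C3 (char_poly B) *m P.
Proof.
move=> P; apply/row_matrixP => i.
have rP : row i P = v *m B ^+ i by apply/rowP => j; rewrite !mxE.
rewrite !row_mul PM rP KRY; last by apply: leq_trans (size_poly _ _) _.
rewrite !coef_poly /= scale0r addr0 !mxE.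
case: i rP => [[|[|[|k]]] Hi] //= _; rewrite !inordK //=.
- by rewrite expr0 mulmx1 !scale0r scale1r add0r addr0.
- by rewrite expr1 !scale0r scale1r !add0r.
rewrite expr2 -mulmxE mulmxA.
have : v *m horner_mx B (char_poly B) = 0 by rewrite Cayley_Hamilton mulmx0.
rewrite KRY; last by rewrite size_char_poly.
have p3 : (char_poly B)`_3 = 1.
  by have := char_poly_monic B; rewrite monicE lead_coefE size_char_poly => /eqP.
rewrite p3 scale1r => /eqP; rewrite addrC addr_eq0 => /eqP ->.
by rewrite !opprD !scaleNr.
Qed.

Lemma NIL (F : fieldType) (p q : {poly F}) : p`_2 = q`_2 ->
  (C3 p - C3 q) *m (C3 p - C3 q) = 0.
Proof.
move=> e2; apply/matrixP => i j; rewrite !mxE !big_ord_recr big_ord0 /= !mxE /=.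
case: i => [[|[|[|k]]] Hi] //=; rewrite ?e2 ?subrr ?mul0r ?mulr0 ?add0r ?addr0 //.
Qed.

Lemma coef2 (F : fieldType) (a b c : F) :
  (('X - a%:P) * ('X - b%:P) * ('X - c%:P))`_2 = - (a + b + c).
Proof.
have -> : ('X - a%:P) * ('X - b%:P) * ('X - c%:P) =
   'X^3 - (a + b + c)%:P * 'X^2 + (a*b + b*c + c*a)%:P * 'X - (a*b*c)%:P.
  rewrite !polyCD !polyCM; ring.
rewrite coefB coefD coefB coefXn !coefCM coefXn coefX coefC /=.
by rewrite mulr1 mulr0 subr0 addr0 sub0r.
Qed.

Unset Implicit Arguments.

Theorem proposition2p3 (F : fieldType)
  (hchar : (2 \in [pchar F])%N)
  (hcard : exists s : seq F, uniq s /\ (4 <= size s)%N)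
  (B : 'M[F]_3) (hB : non_derogative B) (a : F)
  (ha1 : a != \tr B) (ha2 : a != \tr B + 1) :
  exists N D : 'M[F]_3,
    [/\ B = N + D, N *m N = 0, diagonalizable D &
        char_poly D = ('X - a%:P) * ('X - (a + 1)%:P) * ('X - (\tr B + 1)%:P)].
Proof.
have [v iv] := CYC hB.
pose P := \matrix_(i < 3, j < 3) (v *m B ^+ i) 0 j.
have Pu : P \in unitmx := PUNIT iv.
have eB : B = invmx P *m C3 (char_poly B) *m P.
  by rewrite -mulmxA -(@PSIM _ B v) mulKmx.
set q := ('X - a%:P) * ('X - (a + 1)%:P) * ('X - (\tr B + 1)%:P).
have qm : q \is monic by rewrite !rpredM ?monicXsubC.
have sq : size q = 4%N.
  have m2 : ('X - a%:P) * ('X - (a + 1)%:P) \is monic by rewrite rpredM ?monicXsubC.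
  by rewrite (size_Mmonic (monic_neq0 m2) (monicXsubC _))
    (size_Mmonic (monic_neq0 (monicXsubC a)) (monicXsubC _)) !size_XsubC.
have h2 : (2%:R : F) = 0 := pcharf0 hchar.
have e2 : (char_poly B)`_2 = q`_2.
  rewrite (char_poly_trace B (isT : (0 < 3)%N)) /q coef2; congr (- _).
  have -> : a + (a + 1) + (\tr B + 1) = \tr B + 2%:R * (a + 1) by ring.
  by rewrite h2 mul0r addr0.
have cD : char_poly (invmx P *m C3 q *m P) = q by rewrite char_poly_conj // (C3K qm sq).
exists (invmx P *m (C3 (char_poly B) - C3 q) *m P), (invmx P *m C3 q *m P).
split; last exact: cD.
- by rewrite {1}eB -mulmxDl -mulmxDr subrK.
- rewrite !mulmxA mulmxK // -(mulmxA (invmx P)) NIL //.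
  by rewrite mulmx0 mul0mx.
apply/diagonalizableP; exists [:: a; a + 1; \tr B + 1].
  rewrite /= !inE !negb_or ha2 (inj_eq (addIr 1)) ha1 !andbT /=.
  apply/eqP => h; have := congr1 (fun x => x - a) h.
  by rewrite subrr addrC addKr => /eqP; rewrite eq_sym oner_eq0.
apply: dvdp_trans (mxminpoly_dvd_char _) _; rewrite cD.
by rewrite !big_cons big_nil mulr1 !mulrA dvdpp.
Qed.
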